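(* Let $\mathcal X,\mathcal U$ be finite nonempty sets, $f:\mathcal X\times\mathcal U\to\mathcal X$ and $g:\mathcal X\to\mathbb R$. Let $v_{\mathrm A}^*(x)=\max_{\mathbf u\in\mathbb U}\min_{\tau\in\mathbb N} g(\xi_x^{\mathbf u}(\tau))$. Then there is a policy $\pi\in\Pi$ such that $v_{\mathrm A}^*(x)=\min_{\tau\in\mathbb N} g(\xi_x^\pi(\tau))$ for all $x\in\mathcal X$.
   Context: $\mathbb N=\{0,1,\dots\}$; $\Pi$ is the set of maps $\mathcal X\to\mathcal U$; $\mathbb U$ is the set of sequences $\mathbb N\to\mathcal U$. For $\pi\in\Pi$: $\xi_x^\pi(0)=x$, $\xi_x^\pi(t+1)=f(\xi_x^\pi(t),\pi(\xi_x^\pi(t)))$. For $\mathbf u\in\mathbb U$: $\xi_x^{\mathbf u}(0)=x$, $\xi_x^{\mathbf u}(t+1)=f(\xi_x^{\mathbf u}(t),\mathbf u(t))$. *)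

(* Defs.v *)
From mathcomp Require Import all_boot all_order all_algebra.
From mathcomp Require Import all_classical all_reals.
Set Implicit Arguments. Unset Strict Implicit. Unset Printing Implicit Defensive.
Import Order.TTheory GRing.Theory Num.Theory.
Local Open Scope classical_set_scope.
Local Open Scope ring_scope.

Fixpoint traj_pi (X U : Type) (f : X -> U -> X) (pi : X -> U) (x : X) (t : nat) : X :=
  match t with
  | 0%N => x
  | t'.+1 => let y := traj_pi f pi x t' in f y (pi y)
  end.

Fixpoint traj_u (X U : Type) (f : X -> U -> X) (u : nat -> U) (x : X) (t : nat) : X :=
  match t with
  | 0%N => x
  | t'.+1 => f (traj_u f u x t') (u t')
  end.

(* min_{tau in N} s tau, as the infimum of the range (attained when the range is finite) *)
Definition min_nat (R : realType) (s : nat -> R) : R := inf (range s).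

Definition vA (R : realType) (X U : Type) (f : X -> U -> X) (g : X -> R) (x : X) : R :=
  sup [set min_nat (fun t => g (traj_u f u x t)) | u in [set: nat -> U]].

(* Main.v *)
Require Import Defs.
From mathcomp Require Import all_boot all_order all_algebra.
From mathcomp Require Import all_classical all_reals.
Import Order.TTheory GRing.Theory Num.Theory.
Local Open Scope classical_set_scope.
Local Open Scope ring_scope.

Section S.
Variables (R : realType) (X U : finType) (u0 : U) (f : X -> U -> X) (g : X -> R).

Let M : R := \sum_(y : X) `|g y|.

Lemma gbound y : `|g y| <= M.
Proof. by rewrite /M (bigD1 y) //= lerDl sumr_ge0. Qed.

Lemma glb y : - M <= g y.
Proof. have := gbound y; rewrite ler_norml; by case/andP. Qed.

Lemma gub y : g y <= M.
Proof. have := gbound y; rewrite ler_norml; by case/andP. Qed.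

Lemma min_nat_le (s : nat -> X) t : min_nat (fun t => g (s t)) <= g (s t).
Proof.
apply: ge_inf; last by exists t.
by exists (- M) => _ [k _ <-]; exact: glb.
Qed.

Lemma min_nat_ge (s : nat -> R) c : (forall t, c <= s t) -> c <= min_nat s.
Proof.
move=> h; apply: lb_le_inf; first by exists (s 0%N), 0%N.
by move=> _ [k _ <-].
Qed.

Lemma vA_ge x u : min_nat (fun t => g (traj_u f u x t)) <= vA f g x.
Proof.
apply: ub_le_sup; last by exists u.
exists M => _ [w _ <-]; apply: le_trans (min_nat_le _ 0%N) _; exact: gub.
Qed.

Lemma vA_le x c : (forall u, min_nat (fun t => g (traj_u f u x t)) <= c) -> vA f g x <= c.
Proof.
move=> h; apply: ge_sup; first by exists (min_nat (fun t => g (traj_u f (fun=> u0) x t))), (fun=> u0).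
by move=> _ [w _ <-].
Qed.

Lemma traj_shift u x t :
  traj_u f u x t.+1 = traj_u f (fun k => u k.+1) (f x (u 0%N)) t.
Proof. elim: t => [|t IH] //. by rewrite [RHS]/= -IH. Qed.

Lemma vA_step x : exists a, vA f g x <= vA f g (f x a).
Proof.
pose a := [arg max_(b > u0) vA f g (f x b)]%O.
exists a; apply: vA_le => u.
have : vA f g (f x (u 0%N)) <= vA f g (f x a).
  rewrite /a; case: arg_maxP => // i _ H; exact: H.
apply: le_trans; apply: le_trans (vA_ge _ (fun k => u k.+1)).
apply: min_nat_ge => t; rewrite -traj_shift; exact: min_nat_le.
Qed.

Lemma vA_leg x : vA f g x <= g x.
Proof. apply: vA_le => u; exact: (min_nat_le (traj_u f u x) 0%N). Qed.

End S.

Theorem mainTheorem3 (R : realType) (X U : finType) (x0 : X) (u0 : U)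
  (f : X -> U -> X) (g : X -> R) :
  exists pi : X -> U, forall x : X,
    vA f g x = min_nat (fun t => g (traj_pi f pi x t)).
Proof.
pose pi x := [arg max_(b > u0) vA f g (f x b)]%O.
have Hpi x : vA f g x <= vA f g (f x (pi x)).
  have [a Ha] := @vA_step _ _ _ u0 f g x; apply: le_trans Ha _.
  rewrite /pi; case: arg_maxP => // i _ H; exact: H.
clearbody pi.
exists pi => x; apply/eqP; rewrite eq_le; apply/andP; split.
  apply: min_nat_ge => t; apply: le_trans (@vA_leg _ _ _ u0 f g _).
  elim: t => [|t IH]; first exact: lexx.
  exact: le_trans IH (Hpi _).
have E t : traj_pi f pi x t = traj_u f (fun k => pi (traj_pi f pi x k)) x t.
  elim: t => [|t IH]; first by [].
  by rewrite [LHS]/= [RHS]/= IH.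
have := @vA_ge R X U f g x (fun k => pi (traj_pi f pi x k)).
suff -> : (fun t => g (traj_pi f pi x t)) =
  (fun t => g (traj_u f (fun k => pi (traj_pi f pi x k)) x t)) by [].
by apply: funext => t; rewrite E.
Qed.
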